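(* Let $\epsilon\in(0,1)$ and $\mu\ge1$. Let $R^*\in\arg\min_{R\in\mathcal{O}_{p\times k}}\max_{e\in\mathcal{E}}\mathbb{E}_{\mathbf{x}\sim P_e}\|\mathbf{x}-\mathbf{x}RR^\top\|_2^2$ (the population worst-case completion problem with fully observed source domains, equivalently a maxRCS solution). Let $Q_{\mathrm{target}}$ be a distribution on masks $\omega\in\{0,1\}^p$ such that, for $\omega\sim Q_{\mathrm{target}}$, the number $s$ of zero entries of $\omega$ satisfies $s\le\frac{p\epsilon}{k\mu^2(2\epsilon+1)}$ almost surely. If $R^*$ is $\mu$-incoherent, then $$\sup_{P\in\mathcal{P}}\mathcal{L}_{P,Q_{\mathrm{target}}}(R^* )\le(1+\epsilon)\min_{R\in\mathcal{O}_{p\times k}}\sup_{P\in\mathcal{P}}\mathcal{L}_{P,Q_{\mathrm{target}}}(R).$$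
   Context: $\mathcal{O}_{p\times k}=\{V\in\mathbb{R}^{p\times k}:V^\top V=I_k\}$. Source domains $\mathcal{E}=\{1,\dots,E\}$; each $P_e$ is a distribution on $\mathbb{R}^{1\times p}$ with mean zero and finite covariance $\Sigma_e=\mathbb{E}[\mathbf{x}^\top\mathbf{x}]$, $\operatorname{Tr}(\Sigma_e)>0$. $\mathcal{P}$ is the set of distributions on $\mathbb{R}^{1\times p}$ with mean zero, finite second moments and $\mathbb{E}_P[\mathbf{x}^\top\mathbf{x}]\in\operatorname{conv}(\{\Sigma_e\}_{e\in\mathcal{E}})$. $R\in\mathcal{O}_{p\times k}$ is $\mu$-incoherent if every row $R^{(i)}$ satisfies $\|R^{(i)}\|_2\le\mu\sqrt{k/p}$. For $\mathbf{x}\in\mathbb{R}^{1\times p}$, a mask $\omega\in\{0,1\}^p$ ($\omega_i=1$ meaning coordinate $i$ is observed) and $R\in\mathcal{O}_{p\times k}$, $\ell_{\mathrm{OLS}}(\mathbf{x},\omega,R)$ denotes a minimizer over $\ell\in\mathbb{R}^{1\times k}$ of $\sum_{i\in[p]:\omega_i=1}(\mathbf{x}_i-[\ell R^\top]_i)^2$ (any measurable choice of minimizer). For distributions $P$ of $\mathbf{x}$ and $Q$ of $\omega$ (with $\omega$ independent of $\mathbf{x}$), $\mathcal{L}_{P,Q}(R):=\mathbb{E}_{\mathbf{x}\sim P,\omega\sim Q}\|\mathbf{x}-\ell_{\mathrm{OLS}}(\mathbf{x},\omega,R)R^\top\|_2^2$. *)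

(* Defs.v *)
From HB Require Import structures.
From mathcomp Require Import all_boot all_order all_algebra.
From mathcomp Require Import all_classical all_reals all_analysis.
Set Implicit Arguments. Unset Strict Implicit. Unset Printing Implicit Defensive.
Import Order.TTheory GRing.Theory Num.Theory.
Local Open Scope ring_scope.
Local Open Scope classical_set_scope.

Section Defs.
Context {R : realType}.

Definition sqnorm (n : nat) (v : 'rV[R]_n) : R := \sum_(i < n) v ord0 i ^+ 2.

Definition in_O (p k : nat) (U : 'M[R]_(p, k)) : Prop := U^T *m U = 1%:M.

Definition incoherent (p k : nat) (mu : R) (U : 'M[R]_(p, k)) : Prop :=
  forall i : 'I_p, Num.sqrt (sqnorm (row i U)) <= mu * Num.sqrt (k%:R / p%:R).

Definition maskT (p : nat) := {ffun 'I_p -> bool}.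

(* squared residual on the observed coordinates (omega_i = true = observed) *)
Definition obs_err (p k : nat) (x : 'rV[R]_p) (w : maskT p) (U : 'M[R]_(p, k))
  (l : 'rV[R]_k) : R :=
  \sum_(i < p | w i) (x ord0 i - (l *m U^T) ord0 i) ^+ 2.

Definition ols_choice (p k : nat)
  (ls : 'rV[R]_p -> maskT p -> 'M[R]_(p, k) -> 'rV[R]_k) : Prop :=
  forall x w U l, obs_err x w U (ls x w U) <= obs_err x w U l.

Definition ols_measurable (p k : nat)
  (ls : 'rV[R]_p -> maskT p -> 'M[R]_(p, k) -> 'rV[R]_k) : Prop :=
  forall (w : maskT p) (U : 'M[R]_(p, k)) (d : measure_display)
    (T : measurableType d) (X : T -> 'rV[R]_p),
    (forall i, measurable_fun setT (fun t => X t ord0 i)) ->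
    forall j, measurable_fun setT (fun t => ls (X t) w U ord0 j).

Definition mask_dist (p : nat) (q : maskT p -> R) : Prop :=
  (forall w, 0 <= q w) /\ \sum_(w : maskT p) q w = 1.

Definition nmissing (p : nat) (w : maskT p) : nat := #|[set i | ~~ w i]|.

Definition centered_L2 d (T : measurableType d) (P : probability T R) (p : nat)
  (X : T -> 'rV[R]_p) : Prop :=
  forall i : 'I_p,
    [/\ measurable_fun setT (fun t => X t ord0 i),
        P.-integrable setT (fun t => (X t ord0 i)%:E),
        P.-integrable setT (fun t => (X t ord0 i ^+ 2)%:E) &
        (\int[P]_t (X t ord0 i)%:E = 0)%E].

Definition cov d (T : measurableType d) (P : probability T R) (p : nat)
  (X : T -> 'rV[R]_p) : 'M[R]_p :=
  \matrix_(i, j) fine (\int[P]_t (X t ord0 i * X t ord0 j)%:E).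

Definition recon_risk d (T : measurableType d) (P : probability T R) (p k : nat)
  (X : T -> 'rV[R]_p) (U : 'M[R]_(p, k)) : \bar R :=
  (\int[P]_t (sqnorm (X t - X t *m U *m U^T))%:E)%E.

Definition worst_recon d (T : measurableType d) (P : probability T R) (p k E : nat)
  (Xs : 'I_E -> T -> 'rV[R]_p) (U : 'M[R]_(p, k)) : \bar R :=
  (\big[maxe/-oo]_(e < E) recon_risk P (Xs e) U)%E.

Definition is_maxRCS d (T : measurableType d) (P : probability T R) (p k E : nat)
  (Xs : 'I_E -> T -> 'rV[R]_p) (U : 'M[R]_(p, k)) : Prop :=
  in_O U /\
  forall V : 'M[R]_(p, k), in_O V -> (worst_recon P Xs U <= worst_recon P Xs V)%E.

(* L_{P,Q}(U) for x ~ law of X under P, omega ~ q independent of x *)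
Definition compl_loss d (T : measurableType d) (P : probability T R) (p k : nat)
  (X : T -> 'rV[R]_p) (q : maskT p -> R)
  (ls : 'rV[R]_p -> maskT p -> 'M[R]_(p, k) -> 'rV[R]_k) (U : 'M[R]_(p, k)) : \bar R :=
  (\sum_(w : maskT p) (q w)%:E *
     \int[P]_t (sqnorm (X t - ls (X t) w U *m U^T))%:E)%E.

(* the class \mathcal{P}: laws of centered L2 random vectors whose second-moment
   matrix lies in conv{Sigma_e}; sup_{P in \mathcal P} L_{P,Q}(U) *)
Definition in_calP (p E : nat) (Sig : 'I_E -> 'M[R]_p)
  d (T : measurableType d) (P : probability T R) (X : T -> 'rV[R]_p) : Prop :=
  centered_L2 P X /\
  exists lam : 'I_E -> R, (forall e, 0 <= lam e) /\ \sum_(e < E) lam e = 1 /\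
    forall i j, (\int[P]_t (X t ord0 i * X t ord0 j)%:E)%E =
                ((\sum_(e < E) lam e * Sig e i j)%:E)%E.

Definition worst_compl (p k E : nat) (Sig : 'I_E -> 'M[R]_p) (q : maskT p -> R)
  (ls : 'rV[R]_p -> maskT p -> 'M[R]_(p, k) -> 'rV[R]_k) (U : 'M[R]_(p, k)) : \bar R :=
  ereal_sup [set l | exists (d : measure_display) (T : measurableType d)
                      (P : probability T R) (X : T -> 'rV[R]_p),
                      in_calP Sig P X /\ l = compl_loss P X q ls U].

End Defs.

(* Main.v *)
Require Import Defs.
From HB Require Import structures.
From mathcomp Require Import all_boot all_order all_algebra.
From mathcomp Require Import all_classical all_reals all_analysis.
From mathcomp Require Import measurable_realfun.
From mathcomp Require Import ring lra.
Import Order.TTheory GRing.Theory Num.Theory.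
Local Open Scope ring_scope.

Module Helpers.
Set Implicit Arguments. Unset Strict Implicit. Unset Printing Implicit Defensive.

Section Alg.
Variable R : realType.

Lemma CS n (P : pred 'I_n) (f g : 'I_n -> R) :
  (\sum_(i | P i) f i * g i) ^+ 2 <=
  (\sum_(i | P i) f i ^+ 2) * (\sum_(i | P i) g i ^+ 2).
Proof.
set A := \sum_(i | P i) f i ^+ 2; set C := \sum_(i | P i) g i ^+ 2.
set B := \sum_(i | P i) f i * g i.
have key : \sum_(i | P i) \sum_(j | P j) (f i * g j - f j * g i) ^+ 2
   = 2 * (A * C - B ^+ 2).
  rewrite (eq_bigr (fun i => f i ^+ 2 * C + A * g i ^+ 2 - 2 * (f i * g i) * B)).
    rewrite sumrB big_split /= -mulr_suml -mulr_sumr -mulr_suml -/A -/C -/B.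
    rewrite -mulr_sumr -/B; ring.
  move=> i _.
  rewrite /A /C /B mulr_sumr mulr_suml mulr_sumr -big_split -sumrB /=.
  apply: eq_bigr => j _; ring.
have : 0 <= \sum_(i | P i) \sum_(j | P j) (f i * g j - f j * g i) ^+ 2.
  by apply: sumr_ge0 => i _; apply: sumr_ge0 => j _; apply: sqr_ge0.
rewrite key; lra.
Qed.


Lemma rdot n (u v : 'rV[R]_n) :
  (u *m v^T) ord0 ord0 = \sum_i u ord0 i * v ord0 i.
Proof. by rewrite mxE; apply: eq_bigr => i _; rewrite mxE. Qed.

Lemma sqnorm_dot n (v : 'rV[R]_n) : sqnorm v = (v *m v^T) ord0 ord0.
Proof. by rewrite rdot /sqnorm; apply: eq_bigr => i _; rewrite expr2. Qed.

Lemma sqnorm_ge0 n (v : 'rV[R]_n) : 0 <= sqnorm v.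
Proof. by apply: sumr_ge0 => i _; apply: sqr_ge0. Qed.

Lemma sum_expand n (P : pred 'I_n) (b c : 'I_n -> R) s :
  \sum_(i | P i) (b i - s * c i) ^+ 2 =
  \sum_(i | P i) b i ^+ 2 - 2 * s * \sum_(i | P i) b i * c i
    + s ^+ 2 * \sum_(i | P i) c i ^+ 2.
Proof.
rewrite !mulr_sumr -sumrB -big_split /=; apply: eq_bigr => i _; ring.
Qed.

Lemma orth_facts p k (V : 'M[R]_(p, k)) (x : 'rV[R]_p) (dl : 'rV[R]_k) :
  in_O V ->
  (x - x *m V *m V^T) *m (dl *m V^T)^T = 0 /\
  (dl *m V^T) *m (dl *m V^T)^T = dl *m dl^T.
Proof.
rewrite /in_O => HV; rewrite trmx_mul trmxK; split.
  by rewrite mulmxA mulmxBl -!mulmxA HV mulmx1 subrr mul0mx.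
by rewrite mulmxA -(mulmxA dl) HV mulmx1.
Qed.


Lemma pointwise p k (V : 'M[R]_(p, k)) (x : 'rV[R]_p) (w : maskT p)
  (l : 'rV[R]_k) (eps t : R) :
  in_O V -> (forall l', obs_err x w V l <= obs_err x w V l') ->
  \sum_(i < p | ~~ w i) sqnorm (row i V) <= t -> 0 < eps ->
  t * (2 * eps + 1) <= eps ->
  sqnorm (x - l *m V^T) <= (1 + eps) * sqnorm (x - x *m V *m V^T).
Proof.
move=> HV opt Ht eps0 teps.
set b := x - x *m V *m V^T.
set dl := l - x *m V.
set c := dl *m V^T.
have [Hbc Hcc] := orth_facts x dl HV.
set bf := fun i => b ord0 i.
set cf := fun i => c ord0 i.
have H1 : \sum_i bf i * cf i = 0.
  by rewrite -rdot Hbc mxE.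
have H2 : \sum_i cf i ^+ 2 = sqnorm dl.
  by rewrite sqnorm_dot -Hcc -sqnorm_dot.
have H3 : forall s, obs_err x w V (x *m V + s *: dl)
                    = \sum_(i < p | w i) (bf i - s * cf i) ^+ 2.
  move=> s; rewrite /obs_err; apply: eq_bigr => i _.
  rewrite mulmxDl -scalemxAl /bf /cf /b !mxE; congr (_ ^+ 2); ring.
have Hl : l = x *m V + 1 *: dl by rewrite scale1r /dl addrC subrK.
have H4 : forall i, cf i ^+ 2 <= sqnorm dl * sqnorm (row i V).
  move=> i; rewrite /cf /c mxE /sqnorm.
  have -> : \sum_(j < k) row i V ord0 j ^+ 2 = \sum_(j < k) (V i j) ^+ 2.
    by apply: eq_bigr => j _; rewrite mxE.
  have -> : \sum_j dl ord0 j * V^T j i = \sum_(j | true) dl ord0 j * V i j.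
    by apply: eq_bigr => j _; rewrite [V^T _ _]mxE.
  exact: CS.
have H5 : sqnorm (x - l *m V^T) = \sum_i (bf i - 1 * cf i) ^+ 2.
  have Exb : x - l *m V^T = b - c.
    by rewrite /b /c /dl mulmxBl opprB addrA subrK.
  rewrite Exb /sqnorm; apply: eq_bigr => i _.
  by rewrite mul1r /bf /cf !mxE.
have Hb : sqnorm b = \sum_i bf i ^+ 2 by [].
rewrite H5 sum_expand H1 H2 -[\sum_i bf i ^+ 2]/(sqnorm b).
set B := sqnorm b; set D := sqnorm dl.
set Bo := \sum_(i < p | w i) bf i ^+ 2.
set Bs := \sum_(i < p | ~~ w i) bf i ^+ 2.
set Xo := \sum_(i < p | w i) bf i * cf i.
set Xs := \sum_(i < p | ~~ w i) bf i * cf i.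
set Co := \sum_(i < p | w i) cf i ^+ 2.
set Cs := \sum_(i < p | ~~ w i) cf i ^+ 2.
have EB : B = Bo + Bs by rewrite /B Hb (bigID w).
have EX : Xo + Xs = 0 by rewrite -H1 [in RHS](bigID w).
have ED : D = Co + Cs by rewrite /D -H2 (bigID w).
have Bo0 : 0 <= Bo by apply: sumr_ge0 => i _; apply: sqr_ge0.
have Bs0 : 0 <= Bs by apply: sumr_ge0 => i _; apply: sqr_ge0.
have Co0 : 0 <= Co by apply: sumr_ge0 => i _; apply: sqr_ge0.
have Cs0 : 0 <= Cs by apply: sumr_ge0 => i _; apply: sqr_ge0.
have CSs : Xs ^+ 2 <= Bs * Cs by exact: CS.
have CSo : Xo ^+ 2 <= Bo * Co by exact: CS.
have Opt : forall s, Bo - 2 * 1 * Xo + 1 ^+ 2 * Co <= Bo - 2 * s * Xo + s ^+ 2 * Co.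
  by move=> s; rewrite -!sum_expand -!H3 -Hl; apply: opt.
have CoXo : Co <= Xo.
  have [Co_eq0|Co_gt0] := eqVneq Co 0.
    rewrite Co_eq0 in CSo *; move: CSo; rewrite mulr0.
    move=> h; nra.
  have Cop : 0 < Co by rewrite lt_neqAle eq_sym Co_gt0 Co0.
  have := Opt (Xo / Co).
  have hs : Xo / Co * Co = Xo by rewrite mulfVK.
  move=> h.
  have h2 : (Co - Xo) ^+ 2 <= 0.
    have : Co * (Co - 2 * Xo + (Xo / Co) * Xo) <= 0.
      apply: mulr_ge0_le0; first exact: ltW.
      move: h; rewrite [(Xo / Co) ^+ 2]expr2 -[Xo / Co * (Xo / Co) * Co]mulrA hs; nra.
    have -> : Co * (Co - 2 * Xo + Xo / Co * Xo) = (Co - Xo) ^+ 2.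
      rewrite mulrDr mulrA [Co * (Xo / Co)]mulrC hs; ring.
    done.
  have : Co - Xo = 0.
    by apply/eqP; rewrite -sqrf_eq0 eq_le h2 sqr_ge0.
  lra.
have Hts : Cs <= t * D.
  have Ht' : \sum_(i < p | ~~ w i) sqnorm (row i V) * D <= t * D.
    rewrite -mulr_suml; apply: ler_wpM2r => //; exact: sqnorm_ge0.
  apply: le_trans Ht'; apply: ler_sum => i _; rewrite mulrC; exact: H4.
have D0 : 0 <= D by exact: sqnorm_ge0.
have t0 : 0 <= t.
  apply: le_trans Ht; apply: sumr_ge0 => i _; exact: sqnorm_ge0.
have t1 : t < 1 by nra.
have K1 : D * (1 - t) <= - Xs by nra.
have K2 : (D * (1 - t)) ^+ 2 <= B * (t * D).
  apply: (le_trans (y := Xs ^+ 2)).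
    have u0 : 0 <= D * (1 - t) by nra.
    nra.
  apply: le_trans CSs _; apply: ler_pM => //; nra.
have K3 : t <= eps * (1 - t) ^+ 2 by nra.
have K4 : D <= eps * B.
  have [->|Dn0] := eqVneq D 0; first by nra.
  have Dp : 0 < D by rewrite lt_neqAle eq_sym Dn0 D0.
  have K5 : D * (1 - t) ^+ 2 <= t * B.
    have : D * (D * (1 - t) ^+ 2) <= D * (t * B) by move: K2; rewrite exprMn; nra.
    by rewrite ler_pM2l.
  have Bge : 0 <= B by exact: sqnorm_ge0.
  have : D * (1 - t) ^+ 2 <= (eps * B) * (1 - t) ^+ 2 by nra.
  rewrite ler_pM2r //; apply: exprn_gt0; lra.
lra.
Qed.

End Alg.


Section Meas.
Variable R : realType.
Context (d : measure_display) (T : measurableType d).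

Definition mrow n (Y : T -> 'rV[R]_n) :=
  forall i, measurable_fun setT (fun t => Y t ord0 i).

Lemma mrow_sqnorm n (Y : T -> 'rV[R]_n) : mrow Y ->
  measurable_fun setT (fun t => sqnorm (Y t)).
Proof.
move=> mY; rewrite /sqnorm; apply: measurable_sum => i.
exact: measurable_realfun.measurable_funX.
Qed.

Lemma mrow_mul n m (Y : T -> 'rV[R]_n) (M : 'M[R]_(n, m)) : mrow Y ->
  mrow (fun t => Y t *m M).
Proof.
move=> mY i; under eq_fun do rewrite mxE.
apply: measurable_sum => j.
by apply: measurable_realfun.measurable_funM => //; exact: measurable_cst.
Qed.

Lemma mrow_sub n (Y Z : T -> 'rV[R]_n) : mrow Y -> mrow Z ->
  mrow (fun t => Y t - Z t).
Proof.
move=> mY mZ i; under eq_fun do rewrite !mxE.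
exact: measurable_realfun.measurable_funB.
Qed.

End Meas.


Lemma quad_pt (R : realType) n (y : 'rV[R]_n) (M : 'M[R]_n) :
  sqnorm (y *m M) = \sum_i \sum_j (M *m M^T) i j * (y ord0 i * y ord0 j).
Proof.
rewrite sqnorm_dot trmx_mul !mulmxA -(mulmxA y) mxE.
under eq_bigr do rewrite !mxE mulr_suml.
rewrite exchange_big /=; apply: eq_bigr => i _; apply: eq_bigr => j _.
rewrite !mxE; ring.
Qed.

Section Int.
Variable R : realType.
Context (d : measure_display) (T : measurableType d) (P : probability T R).

Lemma int_prod n (X : T -> 'rV[R]_n) : centered_L2 P X -> forall i j,
  P.-integrable setT (fun t => (X t ord0 i * X t ord0 j)%:E).
Proof.
move=> cX i j; have [mi _ ii _] := cX i; have [mj _ ij _] := cX j.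
apply: (le_integrable measurableT _ _ (integrableD measurableT ii ij)).
  apply/measurable_realfun.measurable_EFinP; exact: measurable_realfun.measurable_funM.
move=> t _; rewrite -EFinD /= lee_fin.
rewrite (ger0_norm (x := _ + _)); last by rewrite addr_ge0 // sqr_ge0.
rewrite normrM; set a := X t ord0 i; set b := X t ord0 j.
have : 0 <= (`|a| - `|b|) ^+ 2 by apply: sqr_ge0.
rewrite -[a ^+ 2]real_normK ?num_real // -[b ^+ 2]real_normK ?num_real //.
nra.
Qed.

Lemma quad_int n (X : T -> 'rV[R]_n) (M : 'M[R]_n) : centered_L2 P X ->
  (\int[P]_t (sqnorm (X t *m M))%:E =
   (\sum_i \sum_j (M *m M^T) i j * cov P X i j)%:E)%E.
Proof.
move=> cX.
have E : forall t, (sqnorm (X t *m M))%:E =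
   (\sum_i \sum_j ((M *m M^T) i j * (X t ord0 i * X t ord0 j))%:E)%E.
  by move=> t; rewrite quad_pt -sumEFin; apply: eq_bigr => i _; rewrite -sumEFin.
under eq_integral do rewrite E.
rewrite (integral_sum measurableT); last first.
  move=> i; apply: (integrable_sum measurableT) => j _.
  under eq_fun do rewrite EFinM; apply: (integrableZl measurableT); exact: int_prod.
rewrite -sumEFin; apply: eq_bigr => i _.
rewrite (integral_sum measurableT); last first.
  move=> j; under eq_fun do rewrite EFinM; apply: (integrableZl measurableT); exact: int_prod.
rewrite -sumEFin; apply: eq_bigr => j _.
under eq_integral do rewrite EFinM; rewrite (integralZl measurableT (int_prod cX i j)).
rewrite EFinM /cov [(\matrix_(_, _) _) i j]mxE fineK //; exact: integrable_fin_num (int_prod cX i j).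
Qed.

End Int.


Lemma pointwise_lb (R : realType) p k (V : 'M[R]_(p, k)) (x : 'rV[R]_p) (l : 'rV[R]_k) :
  in_O V -> sqnorm (x - x *m V *m V^T) <= sqnorm (x - l *m V^T).
Proof.
move=> HV.
set b := x - x *m V *m V^T; set dl := l - x *m V; set c := dl *m V^T.
have [Hbc Hcc] := orth_facts x dl HV.
have Exb : x - l *m V^T = b - c.
  by rewrite /b /c /dl mulmxBl opprB addrA subrK.
set bf := fun i => b ord0 i.
set cf := fun i => c ord0 i.
have -> : sqnorm (x - l *m V^T) =
    \sum_i (bf i - 1 * cf i) ^+ 2.
  by rewrite Exb /sqnorm; apply: eq_bigr => i _; rewrite mul1r /bf /cf !mxE.
have H1 : \sum_i bf i * cf i = 0.
  by rewrite -(@rdot R) Hbc mxE.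
rewrite sum_expand H1.
have : 0 <= \sum_i cf i ^+ 2 by apply: sumr_ge0 => i _; exact: sqr_ge0.
rewrite /sqnorm; lra.
Qed.

Lemma recon_eq (R : realType) d (T : measurableType d) (P : probability T R) p k
  (X : T -> 'rV[R]_p) (V : 'M[R]_(p, k)) :
  recon_risk P X V = (\int[P]_t (sqnorm (X t *m (1%:M - V *m V^T)))%:E)%E.
Proof.
apply: eq_integral => t _; by rewrite mulmxBr mulmx1 mulmxA.
Qed.

Section Compl.
Variable R : realType.
Context (d : measure_display) (T : measurableType d) (P : probability T R).
Variables (p k : nat) (X : T -> 'rV[R]_p) (q : maskT p -> R)
  (ls : 'rV[R]_p -> maskT p -> 'M[R]_(p, k) -> 'rV[R]_k).
Hypotheses (cX : centered_L2 P X) (hq : mask_dist q)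
  (hls : ols_choice ls) (mls : ols_measurable ls).

Lemma mX : mrow X. Proof. by move=> i; have [] := cX i. Qed.

Lemma meas_f w U : measurable_fun setT
  (fun t => (sqnorm (X t - ls (X t) w U *m U^T))%:E).
Proof.
apply/measurable_realfun.measurable_EFinP; apply: mrow_sqnorm.
apply: mrow_sub; first exact: mX.
apply: mrow_mul; exact: (mls w U mX).
Qed.

Lemma meas_g (M : 'M[R]_p) : measurable_fun setT
  (fun t => (sqnorm (X t *m M))%:E).
Proof.
apply/measurable_realfun.measurable_EFinP; apply: mrow_sqnorm.
apply: mrow_mul; exact: mX.
Qed.

Lemma sum_q_mul (r : R) :
  (\sum_(w : maskT p) (q w)%:E * r%:E = r%:E)%E.
Proof.
have [_ hs] := hq.
rewrite (eq_bigr (fun w => (q w * r)%:E)); last by move=> w _; rewrite EFinM.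
by rewrite sumEFin -mulr_suml hs mul1r.
Qed.

Lemma compl_lower U : in_O U ->
  (recon_risk P X U <= compl_loss P X q ls U)%E.
Proof.
move=> HU; have [q0 _] := hq.
have [r Hr] : exists r, recon_risk P X U = r%:E.
  by eexists; rewrite recon_eq quad_int.
rewrite Hr -sum_q_mul /compl_loss; apply: lee_sum => w _.
apply: lee_wpmul2l; first by rewrite lee_fin.
rewrite -Hr; apply: ge0_le_integral => //.
- by move=> t _; rewrite lee_fin; exact: sqnorm_ge0.
- have := meas_g (1%:M - U *m U^T).
  by apply: eq_measurable_fun => t _; rewrite mulmxBr mulmx1 mulmxA.
- exact: meas_f.
- by move=> t _; rewrite lee_fin; exact: pointwise_lb.
Qed.


Lemma compl_upper V (eps : R) : in_O V -> 0 < eps ->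
  (forall w, 0 < q w ->
     (\sum_(i < p | ~~ w i) sqnorm (row i V)) * (2 * eps + 1) <= eps) ->
  forall r, recon_risk P X V = r%:E ->
  (compl_loss P X q ls V <= ((1 + eps) * r)%:E)%E.
Proof.
move=> HV eps0 Ht r Hr; have [q0 _] := hq.
rewrite -sum_q_mul /compl_loss; apply: lee_sum => w _.
have [->|qn0] := eqVneq (q w) 0; first by rewrite !mul0e.
have qp : 0 < q w by rewrite lt_neqAle eq_sym qn0 q0.
apply: lee_wpmul2l; first by rewrite lee_fin.
set M := 1%:M - V *m V^T.
have mg : measurable_fun setT (fun t => sqnorm (X t *m M)).
  apply: mrow_sqnorm; apply: mrow_mul; exact: mX.
apply: (@le_trans _ _ (\int[P]_t (((1 + eps) * sqnorm (X t *m M))%:E))%E).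
  apply: ge0_le_integral => //.
  - by move=> t _; rewrite lee_fin; exact: sqnorm_ge0.
  - exact: meas_f.
  - by apply/measurable_EFinP; apply: measurableT_comp mg.
  - move=> t _; rewrite lee_fin.
    rewrite /M mulmxBr mulmx1 mulmxA.
    apply: (pointwise (t := \sum_(i < p | ~~ w i) sqnorm (row i V))) => //.
    exact: (Ht w qp).
under eq_integral do rewrite EFinM.
rewrite ge0_integralZl_EFin //; last by lra.
- by rewrite -recon_eq Hr EFinM.
- by move=> t _; rewrite lee_fin; exact: sqnorm_ge0.
- exact/measurable_EFinP.
Qed.

End Compl.


Lemma tbound (R : realType) p k (V : 'M[R]_(p, k)) (mu eps : R) (w : maskT p) :
  0 < eps -> 1 <= mu -> incoherent mu V ->
  (nmissing w)%:R <= p%:R * eps / (k%:R * mu ^+ 2 * (2 * eps + 1)) ->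
  (\sum_(i < p | ~~ w i) sqnorm (row i V)) * (2 * eps + 1) <= eps.
Proof.
move=> eps0 mu1 Hinc Hs.
set c := mu ^+ 2 * (k%:R / p%:R).
have c0 : 0 <= c by rewrite /c mulr_ge0 ?sqr_ge0 // divr_ge0.
have Hrow : forall i, sqnorm (row i V) <= c.
  move=> i; have h := Hinc i.
  have a0 := sqnorm_ge0 (row i V).
  have s0 : 0 <= Num.sqrt (sqnorm (row i V)) by apply: sqrtr_ge0.
  have kp0 : 0 <= k%:R / p%:R :> R by rewrite divr_ge0.
  rewrite -(sqr_sqrtr a0) /c -(sqr_sqrtr kp0).
  have s1 : 0 <= Num.sqrt (k%:R / p%:R : R) by apply: sqrtr_ge0.
  nra.
have Hsum : \sum_(i < p | ~~ w i) sqnorm (row i V) <= (nmissing w)%:R * c.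
  apply: (@le_trans _ _ (\sum_(i < p | ~~ w i) c)); first by apply: ler_sum.
  rewrite (eq_bigl (fun i => i \in ([set i | ~~ w i]%classic : set 'I_p))); last first.
    move=> i; apply/idP/idP; rewrite inE //.
  by rewrite sumr_const mulr_natl /nmissing.
have e0 : 0 < 2 * eps + 1 by lra.
apply: (@le_trans _ _ ((nmissing w)%:R * c * (2 * eps + 1))).
  by apply: ler_wpM2r => //; lra.
have [p0|pn0] := eqVneq p 0%N.
  have pR : p%:R = 0 :> R by rewrite p0.
  move: Hs; rewrite pR mul0r mul0r => Hs.
  have -> : (nmissing w)%:R = 0 :> R by apply/eqP; rewrite eq_le Hs ler0n.
  by rewrite !mul0r; lra.
have [k0|kn0] := eqVneq k 0%N.
  have kR : k%:R = 0 :> R by rewrite k0.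
  by rewrite /c kR mul0r mulr0 mulr0 mul0r; lra.
have pp : 0 < p%:R :> R by rewrite ltr0n lt0n.
have kp : 0 < k%:R :> R by rewrite ltr0n lt0n.
have mp : 0 < mu by lra.
apply: (@le_trans _ _ (p%:R * eps / (k%:R * mu ^+ 2 * (2 * eps + 1)) * c * (2 * eps + 1))).
  apply: ler_wpM2r; first lra.
  by apply: ler_wpM2r.
have -> : p%:R * eps / (k%:R * mu ^+ 2 * (2 * eps + 1)) * c * (2 * eps + 1) = eps.
  rewrite /c; field.
  by rewrite (gt_eqF pp) (gt_eqF kp) (gt_eqF mp) (gt_eqF e0).
by [].
Qed.

End Helpers.
Import Helpers.

Lemma delta_sum (R : realType) E (e : 'I_E) (F : 'I_E -> R) :
  \sum_(e' < E) (e' == e)%:R * F e' = F e.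
Proof.
rewrite (bigD1 e) //= eqxx mul1r big1 ?addr0 // => i /negbTE ->.
by rewrite mul0r.
Qed.

Lemma src_in_calP (R : realType) (d : measure_display) (T : measurableType d)
  (Ps : probability T R) p E (Xs : 'I_E -> T -> 'rV[R]_p) e :
  (forall e, centered_L2 Ps (Xs e)) ->
  in_calP (fun e => cov Ps (Xs e)) Ps (Xs e).
Proof.
move=> cX; split; first exact: cX.
exists (fun e' => (e' == e)%:R); split.
  by move=> e'; rewrite ler0n.
split.
  by rewrite -[RHS](delta_sum R E e (fun _ => 1)); apply: eq_bigr => i _; rewrite mulr1.
move=> i j; rewrite (delta_sum R E e (fun e' => cov Ps (Xs e') i j)) /cov mxE fineK //.
exact: integrable_fin_num (int_prod (cX e) i j).
Qed.

Theorem mainTheorem8 (R : realType) (p k E : nat) (eps mu : R)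
  (d : measure_display) (T : measurableType d) (Ps : probability T R)
  (Xs : 'I_E -> T -> 'rV[R]_p) (Rstar : 'M[R]_(p, k))
  (q : maskT p -> R) (ls : 'rV[R]_p -> maskT p -> 'M[R]_(p, k) -> 'rV[R]_k) :
  (0 < E)%N -> 0 < eps < 1 -> 1 <= mu ->
  (forall e, centered_L2 Ps (Xs e)) ->
  (forall e, 0 < \tr (cov Ps (Xs e))) ->
  is_maxRCS Ps Xs Rstar ->
  mask_dist q ->
  (forall w, 0 < q w ->
     (nmissing w)%:R <= p%:R * eps / (k%:R * mu ^+ 2 * (2 * eps + 1))) ->
  ols_choice ls -> ols_measurable ls ->
  incoherent mu Rstar ->
  forall U : 'M[R]_(p, k), in_O U ->
    (worst_compl (fun e => cov Ps (Xs e)) q ls Rstar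
       <= (1 + eps)%:E * worst_compl (fun e => cov Ps (Xs e)) q ls U)%E.
Proof.
move=> E0 /andP[eps0 eps1] mu1 cX _ [HR Hmin] hq Hs hls mls Hinc U HU.
set Sig := fun e => cov Ps (Xs e).
set A := fun V : 'M[R]_(p, k) => (1%:M - V *m V^T) *m (1%:M - V *m V^T)^T.
have Hrec : forall e V, recon_risk Ps (Xs e) V =
    (\sum_i \sum_j A V i j * Sig e i j)%:E.
  by move=> e V; rewrite recon_eq quad_int.
have HlowU : (worst_recon Ps Xs U <= worst_compl Sig q ls U)%E.
  apply: bigmax_le; first exact: leNye.
  move=> e _; apply: (le_trans (compl_lower (cX e) hq mls HU)).
  apply: ereal_sup_ubound; exists d, T, Ps, (Xs e); split => //.
  exact: src_in_calP.
have HW := Hmin U HU.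
set W := worst_recon Ps Xs Rstar in HW *.
have HeW : forall e, ((\sum_i \sum_j A Rstar i j * Sig e i j)%:E <= W)%E.
  move=> e; rewrite -Hrec /W /worst_recon.
  exact: (le_bigmax -oo%E (fun e => recon_risk Ps (Xs e) Rstar) e).
apply: (@le_trans _ _ ((1 + eps)%:E * W)%E); last first.
  apply: lee_wpmul2l; first by rewrite lee_fin; lra.
  exact: le_trans HW HlowU.
apply: ge_ereal_sup => l [d' [T' [P' [X [[cX' [lam [l0 [ls1 hlam]]]] ->]]]]].
set r := \sum_(e < E) lam e * \sum_i \sum_j A Rstar i j * Sig e i j.
have Hr : recon_risk P' X Rstar = r%:E.
  rewrite recon_eq quad_int // /r.
  congr (_%:E).
  transitivity (\sum_i \sum_j A Rstar i j * \sum_(e < E) lam e * Sig e i j).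
    apply: eq_bigr => i _; apply: eq_bigr => j _.
    by rewrite /cov [(\matrix_(_, _) _) i j]mxE hlam /=.
  transitivity (\sum_i \sum_j \sum_(e < E) lam e * (A Rstar i j * Sig e i j)).
    apply: eq_bigr => i _; apply: eq_bigr => j _; rewrite mulr_sumr.
    by apply: eq_bigr => e _; ring.
  transitivity (\sum_i \sum_(e < E) \sum_j lam e * (A Rstar i j * Sig e i j)).
    by apply: eq_bigr => i _; exact: exchange_big.
  rewrite exchange_big /=; apply: eq_bigr => e _; rewrite mulr_sumr.
  by apply: eq_bigr => i _; rewrite mulr_sumr.
apply: (le_trans (compl_upper cX' hq hls mls HR eps0 _ Hr)).
  by move=> w qw; apply: (tbound eps0 mu1 Hinc (Hs w qw)).
rewrite EFinM; apply: lee_wpmul2l; first by rewrite lee_fin; lra.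
case: W HeW {HW} => [w| |] HeW.
- rewrite lee_fin /r.
  apply: (@le_trans _ _ (\sum_(e < E) lam e * w)).
    apply: ler_sum => e _; apply: ler_wpM2l => //; rewrite -lee_fin; exact: HeW.
  by rewrite -mulr_suml ls1 mul1r.
- exact: leey.
- have := HeW (Ordinal E0); by rewrite leeNy_eq.
Qed.
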